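(* Let $\mathcal{X}=\mathbb{R}_{>0}^3$, $\mathcal{Y}=\mathbb{R}_{>0}$, $\mathcal{U}=\mathbb{R}_{>0}$, and consider $x^+=f(x,u)$, $y=h(x)$ with $f(x,u)=\big(x_1x_2x_3,\ x_3/x_1,\ \sqrt{x_1x_2u}\big)^T$ and $h(x)=x_1$. Then (i) for every $x\in\mathcal{X}$, $[x]_2=\{x\}$; and (ii) the system $$\hat x^+=\big(\hat x_2\hat x_3 y,\ \hat x_3/\hat x_1,\ \sqrt{\hat x_1\hat x_2 u}\big)^T$$ is a deadbeat observer for this system.
   Context: $h^{-1}(y):=\{\eta\in\mathcal{X}:h(\eta)=y\}$; $f(S,u):=\{f(s,u):s\in S\}$; $[S]_k:=\bigcup_{s\in S}[s]_k$. Define $[x]_0:=h^{-1}(h(x))$, and for $k\ge0$: $[x]_k^+:=\bigcup_{(\eta,u)\in\mathcal{X}\times\mathcal{U}:f(\eta,u)=x} f([\eta]_k,u)$, $[x]_{k+1}:=[x]_k^+\cap[x]_0$. For an input sequence $\mathbf{u}=(u_0,u_1,\ldots)$, $\phi(0,x,\mathbf{u})=x$, $\phi(k+1,x,\mathbf{u})=f(\phi(k,x,\mathbf{u}),u_k)$. For an observer $\hat x^+=g(\hat x,y,u)$, the coupled solution is $\psi(0,\hat x,x,\mathbf{u})=\hat x$, $\psi(k+1,\hat x,x,\mathbf{u})=g(\psi(k,\hat x,x,\mathbf{u}),h(\phi(k,x,\mathbf{u})),u_k)$; it is a deadbeat observer if there is $p\ge1$ with $\psi(k,\hat x,x,\mathbf{u})=\phi(k,x,\mathbf{u})$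 for all $x,\hat x\in\mathcal{X}$, all input sequences $\mathbf{u}$ with values in $\mathcal{U}$, and all $k\ge p$. *)

(* Defs.v *)
From Stdlib Require Import Reals.
Open Scope R_scope.

(* Generic notions for a system x+ = f(x,u), y = h(x), where the state space
   X is a subset (predicate Xs) of a carrier type T, and the input space U is
   a subset (predicate Us) of a carrier type V. *)

Definition preimg {T Y : Type} (Xs : T -> Prop) (h : T -> Y) (y : Y) : T -> Prop :=
  fun eta => Xs eta /\ h eta = y.

(* [x]_k.  [x]_0 = h^{-1}(h x);
   [x]_{k+1} = [x]_k^+ /\ [x]_0, where
   [x]_k^+ = U_{(eta,u) in X x U, f(eta,u) = x} f([eta]_k, u). *)
Fixpoint cls {T V Y : Type} (Xs : T -> Prop) (Us : V -> Prop)
  (f : T -> V -> T) (h : T -> Y) (k : nat) (x : T) : T -> Prop :=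
  match k with
  | O => preimg Xs h (h x)
  | S k' => fun z =>
      (exists (eta : T) (u : V), Xs eta /\ Us u /\ f eta u = x /\
          exists s, cls Xs Us f h k' eta s /\ z = f s u)
      /\ preimg Xs h (h x) z
  end.

Fixpoint phi {T V : Type} (f : T -> V -> T) (k : nat) (x : T) (u : nat -> V) : T :=
  match k with
  | O => x
  | S k' => f (phi f k' x u) (u k')
  end.

Fixpoint psi {T V Y : Type} (f : T -> V -> T) (h : T -> Y) (g : T -> Y -> V -> T)
  (k : nat) (xh x : T) (u : nat -> V) : T :=
  match k with
  | O => xh
  | S k' => g (psi f h g k' xh x u) (h (phi f k' x u)) (u k')
  end.

Definition deadbeat_observer {T V Y : Type} (Xs : T -> Prop) (Us : V -> Prop)
  (f : T -> V -> T) (h : T -> Y) (g : T -> Y -> V -> T) : Prop :=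
  exists p : nat, (1 <= p)%nat /\
    forall (x xh : T) (u : nat -> V),
      Xs x -> Xs xh -> (forall k, Us (u k)) ->
      forall k : nat, (p <= k)%nat -> psi f h g k xh x u = phi f k x u.

Definition Xpos (x : R * R * R) : Prop :=
  let '(x1, x2, x3) := x in 0 < x1 /\ 0 < x2 /\ 0 < x3.
Definition Upos (u : R) : Prop := 0 < u.

Definition fex (x : R * R * R) (u : R) : R * R * R :=
  let '(x1, x2, x3) := x in (x1 * x2 * x3, x3 / x1, sqrt (x1 * x2 * u)).

Definition hex (x : R * R * R) : R := let '(x1, _, _) := x in x1.

Definition gex (xh : R * R * R) (y : R) (u : R) : R * R * R :=
  let '(xh1, xh2, xh3) := xh in (xh2 * xh3 * y, xh3 / xh1, sqrt (xh1 * xh2 * u)).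

(* Main.v *)
Require Import Defs.
From Stdlib Require Import Reals Lra Lia.
Open Scope R_scope.

Ltac pos := unfold Rdiv in *; repeat (apply Rmult_lt_0_compat || apply Rinv_0_lt_compat); auto.

Lemma sq_eq (x y : R) : 0 <= x -> 0 <= y -> x * x = y * y -> x = y.
Proof. intros Hx Hy H. nra. Qed.

Lemma base_alg (a b c p q r u0 u1 S T V W : R) :
  0 < a -> 0 < b -> 0 < c -> 0 < p -> 0 < q -> 0 < r -> 0 < u0 -> 0 < u1 ->
  0 < S -> 0 < T -> 0 < V -> 0 < W ->
  S * S = a * b * u0 -> T * T = p * q * u0 ->
  V * V = q * r * a * (r / p) * u1 -> W * W = a * b * c * (c / a) * u1 ->
  T / (q * r * a) * V * (a * b * c * (c / a) * S) =
    a * b * c * (c / a) * S * (S / (a * b * c)) * W /\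
  V / (r / p * T * (a * b * c)) = W / (a * b * c * (c / a) * S) /\
  r / p * T * (a * b * c) * (T / (q * r * a)) =
    a * b * c * (c / a) * S * (S / (a * b * c)).
Proof.
  intros Ha Hb Hc Hp Hq Hr Hu0 Hu1 HS0 HT0 HV0 HW0 HS HT HV HW.
  assert (E1 : T / (q * r * a) * V = S / (a * b * c) * W).
  { apply sq_eq.
    - apply Rlt_le. pos.
    - apply Rlt_le. pos.
    - replace (T / (q * r * a) * V * (T / (q * r * a) * V))
        with ((T * T) * (V * V) / ((q * r * a) * (q * r * a))) by (field; lra).
      replace (S / (a * b * c) * W * (S / (a * b * c) * W))
        with ((S * S) * (W * W) / ((a * b * c) * (a * b * c))) by (field; lra).
      rewrite HT, HV, HS, HW. field. lra. }
  split; [|split].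
  - transitivity (T / (q * r * a) * V * (a * b * c * (c / a) * S)); [reflexivity|].
    rewrite E1. field. lra.
  - apply sq_eq.
    + apply Rlt_le. pos.
    + apply Rlt_le. pos.
    + replace (V / (r / p * T * (a * b * c)) * (V / (r / p * T * (a * b * c))))
        with ((V * V) / ((r / p) * (r / p) * (T * T) * ((a * b * c) * (a * b * c))))
        by (field; lra).
      replace (W / (a * b * c * (c / a) * S) * (W / (a * b * c * (c / a) * S)))
        with ((W * W) / ((a * b * c * (c / a)) * (a * b * c * (c / a)) * (S * S)))
        by (field; lra).
      rewrite HT, HV, HS, HW. field. lra.
  - replace (r / p * T * (a * b * c) * (T / (q * r * a))) with ((T * T) * (b * c) / (p * q))
      by (field; lra).
    replace (a * b * c * (c / a) * S * (S / (a * b * c))) with ((S * S) * c / a)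
      by (field; lra).
    rewrite HT, HS. field. lra.
Qed.

Lemma sqrt_pos' x : 0 < x -> 0 < sqrt x.
Proof. intros; apply sqrt_lt_R0; auto. Qed.

Lemma base3 a b c p q r (u : nat -> R) :
  0 < a -> 0 < b -> 0 < c -> 0 < p -> 0 < q -> 0 < r -> (forall k, 0 < u k) ->
  psi fex hex gex 3 (p,q,r) (a,b,c) u = phi fex 3 (a,b,c) u.
Proof.
  intros Ha Hb Hc Hp Hq Hr Hu. simpl.
  assert (Hu0 := Hu 0%nat). assert (Hu1 := Hu 1%nat).
  assert (P1 : 0 < a * b * u 0%nat) by (repeat apply Rmult_lt_0_compat; auto).
  assert (P2 : 0 < p * q * u 0%nat) by (repeat apply Rmult_lt_0_compat; auto).
  assert (P3 : 0 < q * r * a * (r / p) * u 1%nat)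
    by pos.
  assert (P4 : 0 < a * b * c * (c / a) * u 1%nat)
    by pos.
  destruct (base_alg a b c p q r (u 0%nat) (u 1%nat)
     (sqrt (a * b * u 0%nat)) (sqrt (p * q * u 0%nat))
     (sqrt (q * r * a * (r / p) * u 1%nat)) (sqrt (a * b * c * (c / a) * u 1%nat)))
    as [E1 [E2 E3]]; auto using sqrt_pos'; try (apply sqrt_sqrt; lra).
  rewrite E1, E2, E3. reflexivity.
Qed.

Lemma refl_cls k x : Xpos x -> cls Xpos Upos fex hex k x x.
Proof.
  revert x. induction k as [|k IH]; intros [[x1 x2] x3] Hx.
  - simpl. split; auto.
  - destruct Hx as [H1 [H2 H3]]. simpl. split; [|split; [simpl; auto|reflexivity]].
    exists (1, x1 / x2, x2), (x3 * x3 * x2 / x1).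
    assert (Hpre : Xpos (1, x1 / x2, x2)).
    { simpl. split; [lra|split; [apply Rdiv_lt_0_compat|]; auto]. }
    split; [exact Hpre|]. split.
    { unfold Upos. apply Rdiv_lt_0_compat; auto. repeat apply Rmult_lt_0_compat; auto. }
    assert (Hf : fex (1, x1 / x2, x2) (x3 * x3 * x2 / x1) = (x1, x2, x3)).
    { simpl. f_equal; [f_equal; field; lra|].
      replace (1 * (x1 / x2) * (x3 * x3 * x2 / x1)) with (x3 * x3) by (field; lra).
      apply sqrt_square. lra. }
    split; [exact Hf|].
    exists (1, x1 / x2, x2). split; [apply IH; exact Hpre|symmetry; exact Hf].
Qed.

Lemma gdiag x y : gex x (hex x) y = fex x y.
Proof. destruct x as [[a b] c]. simpl. f_equal. f_equal. ring. Qed.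

Theorem mainTheorem9 :
  (forall x : R * R * R, Xpos x ->
     forall z : R * R * R, cls Xpos Upos fex hex 2 x z <-> z = x)
  /\ deadbeat_observer Xpos Upos fex hex gex.
Proof.
  split.
  - intros x Hx z. split.
    + intros [[eta [u [Heta [Hu [Hfx [s [Hs Hz]]]]]]] [Hz0 Hzh]].
      destruct Hs as [[eta' [u' [Heta' [Hu' [Hfe [r [Hr Hsr]]]]]]] [Hs0 Hsh]].
      destruct Hr as [Hr0 Hrh].
      subst z x eta s.
      destruct eta' as [[f1 f2] f3]. destruct r as [[r1 r2] r3].
      destruct Heta' as [F1 [F2 F3]]. destruct Hr0 as [R1 [R2 R3]].
      unfold Upos in *. simpl in Hrh, Hsh, Hzh. subst r1.
      assert (A0 : 0 < sqrt (f1 * r2 * u')) by (apply sqrt_pos'; repeat apply Rmult_lt_0_compat; auto).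
      assert (B0 : 0 < sqrt (f1 * f2 * u')) by (apply sqrt_pos'; repeat apply Rmult_lt_0_compat; auto).
      set (A := sqrt (f1 * r2 * u')) in *. set (B := sqrt (f1 * f2 * u')) in *.
      assert (HA : A * A = f1 * r2 * u') by (apply sqrt_sqrt; repeat apply Rmult_le_pos; lra).
      assert (HB : B * B = f1 * f2 * u') by (apply sqrt_sqrt; repeat apply Rmult_le_pos; lra).
      assert (E1 : r3 * A = f3 * B).
      { rewrite Hsh in Hzh.
        assert (K : 0 < f1 * f2 * f3) by (repeat apply Rmult_lt_0_compat; auto).
        apply Rmult_eq_reg_l with (f1 * f2 * f3 / f1); [|apply Rgt_not_eq; apply Rdiv_lt_0_compat; auto].
        transitivity (f1 * f2 * f3 * (r3 / f1) * A); [field; lra|].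
        rewrite Hzh. field. lra. }
      assert (E2 : r3 * r3 * r2 = f3 * f3 * f2).
      { apply Rmult_eq_reg_l with (f1 * u'); [|apply Rgt_not_eq; apply Rmult_lt_0_compat; auto].
        transitivity (r3 * r3 * (A * A)); [rewrite HA; ring|]. replace (r3 * r3 * (A * A)) with ((r3 * A) * (r3 * A)) by ring.
        rewrite E1.
        transitivity (f3 * f3 * (B * B)); [ring|]. rewrite HB. ring. }
      assert (E3 : r2 * r3 = f2 * f3).
      { apply Rmult_eq_reg_l with f1; [|lra]. rewrite <- !Rmult_assoc. exact Hsh. }
      assert (E4 : r3 = f3).
      { apply Rmult_eq_reg_l with (f2 * f3); [|apply Rgt_not_eq; apply Rmult_lt_0_compat; auto].
        rewrite <- E3 at 1. transitivity (r3 * r3 * r2); [ring|]. rewrite E2. ring. }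
      subst r3.
      assert (E5 : r2 = f2).
      { apply Rmult_eq_reg_r with f3; [exact E3|lra]. }
      subst r2. reflexivity.
    + intros ->. apply refl_cls. exact Hx.
  - exists 3%nat. split; [lia|].
    intros [[a b] c] [[p q] r] u Hx Hxh Hu k Hk.
    destruct Hx as [Ha [Hb Hc]]. destruct Hxh as [Hp [Hq Hr]].
    induction k as [|k IH]; [lia|].
    destruct (Nat.eq_dec k 2) as [->|Hk2].
    + apply base3; auto.
    + simpl. rewrite IH by lia. apply gdiag.
Qed.
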